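(* There is a countable subset $E\subset\mathbb{C}$ containing $1,q^{-2},q^{-4},\dots$ with the following property: for every $t\in\mathbb{C}\setminus E$ there is a countable union $X$ of algebraic hypersurfaces in $\mathbb{C}^{2n+1}$ such that for every $(c_0,\dots,c_n,t_0,\dots,t_{n-1})\in\mathbb{C}^{2n+1}\setminus X$ with $c_n\neq0$, the $g_t$-twisted trace $T$ on $\mathcal{A}_+$ (for the parameter $P(z)=\sum_{i=0}^nc_iz^i$) determined by $T(Z^i)=t_i$, $0\le i\le n-1$, is nondegenerate.
   Context: Let $q\in\mathbb{C}$ with $0<|q|<1$ and $n\ge2$. For $P\in\mathbb{C}[z]$ of degree $n$, $\mathcal{A}_P$ is generated by $u,v,Z,Z^{-1}$ with relations $ZZ^{-1}=Z^{-1}Z=1$, $ZuZ^{-1}=q^2u$, $ZvZ^{-1}=q^{-2}v$, $uv=P(q^{-1}Z)$, $vu=P(qZ)$, and $\mathcal{A}_+$ is its subalgebra generated by $u,v,Z$, with basis $Z^iu^j,Z^iv^j$ ($i,j\ge0$) and filtration $F_k=\operatorname{span}\{Z^iu^j,Z^iv^j: 2i+nj\le k\}$. $g_t$ is the automorphism $u\mapsto tu$, $v\mapsto t^{-1}v$, $Z\mapsto Z$. A $g_t$-twisted trace on $\mathcal{A}_+$ is a linear $T$ with $T(ab)=T(bg_t(a))$ for $a,b\in\mathcal{A}_+$; for $t\ne q^{-2k}$ ($k\ge0$) such traces are uniquely determined by the arbitrary values $T(1),\dots,T(Z^{n-1})$. $T$ is nondegenerate if for every $k\ge0$ the bilinear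 form $(a,b)\mapsto T(ab)$ on $F_k$ is nondegenerate. *)

(* Defs.v *)
From HB Require Import structures.
From mathcomp Require Import all_boot all_order all_algebra.
From mathcomp Require Import complex.
From mathcomp Require Import freeg mpoly.
From mathcomp Require Import reals.

Set Implicit Arguments.
Unset Strict Implicit.
Unset Printing Implicit Defensive.

Import Order.TTheory GRing.Theory Num.Theory.
Local Open Scope ring_scope.

Section Aplus.
Variables (C : numClosedFieldType) (A : algType C).

Definition Peval (n : nat) (c : nat -> C) (w : A) : A :=
  \sum_(i < n.+1) c i *: w ^+ i.

Definition mono (u v Z : A) (m : nat * int) : A :=
  Z ^+ m.1 * (if (0 <= m.2)%R then u ^+ `|m.2|%N else v ^+ `|m.2|%N).

(* A (with distinguished elements u, v, Z) is the algebra A_+ for the parameters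
   q and P(z) = \sum_{i<=n} c_i z^i: the defining relations hold and the
   monomials Z^i u^j, Z^i v^j (i, j >= 0) form a basis of A. *)
Definition is_Aplus (q : C) (n : nat) (c : nat -> C) (u v Z : A) : Prop :=
  [/\ [/\ Z * u = q ^+ 2 *: (u * Z),
      Z * v = q ^- 2 *: (v * Z),
      u * v = Peval n c (q^-1 *: Z) &
      v * u = Peval n c (q *: Z)],
      (forall a : A, exists s : seq ((nat * int) * C),
          a = \sum_(x <- s) x.2 *: mono u v Z x.1) &
      (forall (s : seq (nat * int)) (k : nat * int -> C), uniq s ->
          \sum_(m <- s) k m *: mono u v Z m = 0 ->
          forall m, m \in s -> k m = 0)].

Definition is_gt (t : C) (u v Z : A) (g : A -> A) : Prop :=
  [/\ (forall a b, g (a + b) = g a + g b),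
      (forall (x : C) a, g (x *: a) = x *: g a),
      (forall a b, g (a * b) = g a * g b),
      g 1 = 1 &
      [/\ g u = t *: u, g v = t^-1 *: v & g Z = Z]].

Definition twisted_trace (g : A -> A) (T : A -> C) : Prop :=
  [/\ (forall a b, T (a + b) = T a + T b),
      (forall (x : C) a, T (x *: a) = x * T a) &
      (forall a b, T (a * b) = T (b * g a))].

Definition inF (n : nat) (u v Z : A) (k : nat) (a : A) : Prop :=
  exists s : seq ((nat * int) * C),
    all (fun x => (2 * x.1.1 + n * `|x.1.2|)%N <= k)%N s /\
    a = \sum_(x <- s) x.2 *: mono u v Z x.1.

Definition trace_nondegenerate (n : nat) (u v Z : A) (T : A -> C) : Prop :=
  forall k : nat, forall a, inF n u v Z k a ->
    (forall b, inF n u v Z k b -> T (a * b) = 0) -> a = 0.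

End Aplus.

(* Main.v *)
Require Import Defs.
From HB Require Import structures.
From mathcomp Require Import all_boot all_order all_algebra.
From mathcomp Require Import complex.
From mathcomp Require Import freeg mpoly.
From mathcomp Require Import reals.
From mathcomp Require Import zify ring.
Import Order.TTheory GRing.Theory Num.Theory.
Local Open Scope ring_scope.
Set Implicit Arguments.
Unset Strict Implicit.
Unset Printing Implicit Defensive.
Lemma helper_tel (K : comRingType) (a s B C w : K) :
  a * s * (B - w * C) = a * s * B - w * a * s * C.
Proof. ring. Qed.
Lemma commute_pow (K : fieldType) (A : algType K) (x y : A) (s : K) :
  x * y = s *: (y * x) -> forall j m, x ^+ j * y ^+ m = s ^+ (j * m)%N *: (y ^+ m * x ^+ j).
Proof.
move=> H.
have H1 : forall m, x * y ^+ m = s ^+ m *: (y ^+ m * x).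
  elim=> [|m IH]; first by rewrite !expr0 mulr1 mul1r scale1r.
  rewrite exprSr mulrA IH -scalerAl.
  rewrite -[y ^+ m * x * y]mulrA H scalerAr scalerA.
  by rewrite -scalerAr mulrA -!exprSr.
elim=> [|j IH] m; first by rewrite mul0n !expr0 mul1r mulr1 scale1r.
have -> : x ^+ j.+1 * y ^+ m = x * (x ^+ j * y ^+ m) by rewrite exprS mulrA.
rewrite IH -scalerAr mulrA H1 -scalerAl scalerA -mulrA -exprS.
by rewrite mulSn exprD mulrC.
Qed.
Lemma sum_regroup (V : nmodType) (K : eqType) (I : finType) (f : I -> nat * int)
   (s : seq ((nat * int) * K)) (H : (nat * int) * K -> V) :
  injective f -> (forall y, y \in s -> (exists i, f i = y.1) \/ H y = 0) ->
  \sum_(y <- s) H y = \sum_(i : I) \sum_(y <- s | y.1 == f i) H y.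
Proof.
move=> injf Hs.
under [RHS]eq_bigr do rewrite big_mkcond.
rewrite exchange_big /= big_seq [RHS]big_seq; apply: eq_bigr => y ys.
rewrite -big_mkcond.
have [[i0 fi0]|H0] := Hs y ys.
  rewrite (big_pred1 i0) // => i /=; apply/eqP/eqP=> [E|->]; last by [].
  by apply: injf; rewrite fi0.
by rewrite H0 big1.
Qed.
Lemma int_cases (d : int) : (exists k, d = k%:Z) \/ (exists k, d = - (k.+1)%:Z).
Proof. by case: d => k; [left|right]; exists k; rewrite ?NegzE. Qed.

Lemma int_cases' (d : int) : (exists k, d = - k%:Z) \/ (exists k, d = (k.+1)%:Z).
Proof.
case: d => [[|k]|k]; first by left; exists 0%N.
  by right; exists k.
by left; exists k.+1; rewrite NegzE.
Qed.

Lemma fixed_zero (K : fieldType) (x s : K) : s != 1 -> x = s * x -> x = 0.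
Proof.
move=> s1 E; apply/eqP; have : (1 - s) * x = 0 by rewrite mulrBl mul1r -E subrr.
by move/eqP; rewrite mulf_eq0 subr_eq0 eq_sym (negPf s1).
Qed.

Section Alg.
Variable R : realType.
Local Notation C := R[i].
Variables (q t : C) (n : nat) (c : nat -> C) (A : algType C) (u v Z : A).
Variables (g : A -> A) (T : A -> C).
Hypothesis HA : is_Aplus q n c u v Z.
Hypothesis Hg : is_gt t u v Z g.
Hypothesis HT : twisted_trace g T.
Hypothesis q0 : q != 0.
Hypothesis qpow : forall k, (0 < k)%N -> (q ^+ 2) ^+ k != 1.
Hypothesis t1 : t != 1.

Lemma TD a b : T (a + b) = T a + T b. Proof. by case: HT. Qed.
Lemma TZs (x : C) a : T (x *: a) = x * T a. Proof. by case: HT. Qed.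
Lemma Ttr a b : T (a * b) = T (b * g a). Proof. by case: HT. Qed.
Lemma T0 : T 0 = 0.
Proof. by have := TZs 0 0; rewrite scale0r mul0r. Qed.
Lemma Tsum (I : Type) (r : seq I) (P : pred I) (F : I -> A) :
  T (\sum_(i <- r | P i) F i) = \sum_(i <- r | P i) T (F i).
Proof. by apply: (big_morph T TD T0). Qed.

Lemma gM a b : g (a * b) = g a * g b. Proof. by case: Hg. Qed.
Lemma g1 : g 1 = 1. Proof. by case: Hg. Qed.
Lemma gX a k : g (a ^+ k) = g a ^+ k.
Proof. by elim: k => [|k IH]; rewrite ?g1 // !exprS gM IH. Qed.
Lemma gZ : g Z = Z. Proof. by case: Hg => _ _ _ _ []. Qed.
Lemma gu : g u = t *: u. Proof. by case: Hg => _ _ _ _ []. Qed.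
Lemma gv : g v = t^-1 *: v. Proof. by case: Hg => _ _ _ _ []. Qed.

Lemma uZ : u * Z = q ^- 2 *: (Z * u).
Proof.
case: HA => -[Zu _ _ _] _ _; rewrite Zu scalerA mulVf ?scale1r //.
by rewrite expf_eq0.
Qed.
Lemma vZ : v * Z = q ^+ 2 *: (Z * v).
Proof.
case: HA => -[_ Zv _ _] _ _; rewrite Zv scalerA divff ?scale1r //.
by rewrite expf_eq0.
Qed.
Lemma uv : u * v = \sum_(i < n.+1) (c i * q^-1 ^+ i) *: Z ^+ i.
Proof.
case: HA => -[_ _ -> _] _ _; rewrite /Peval; apply: eq_bigr => i _.
by rewrite exprZn scalerA.
Qed.
Lemma vu : v * u = \sum_(i < n.+1) (c i * q ^+ i) *: Z ^+ i.
Proof.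
case: HA => -[_ _ _ ->] _ _; rewrite /Peval; apply: eq_bigr => i _.
by rewrite exprZn scalerA.
Qed.

Lemma uZp j m : u ^+ j * Z ^+ m = (q ^- 2) ^+ (j * m)%N *: (Z ^+ m * u ^+ j).
Proof. exact: commute_pow uZ j m. Qed.
Lemma vZp j m : v ^+ j * Z ^+ m = (q ^+ 2) ^+ (j * m)%N *: (Z ^+ m * v ^+ j).
Proof. exact: commute_pow vZ j m. Qed.
Lemma uZm m : u * Z ^+ m = (q ^- 2) ^+ m *: (Z ^+ m * u).
Proof. by have := uZp 1 m; rewrite !expr1 mul1n. Qed.
Lemma vZm m : v * Z ^+ m = (q ^+ 2) ^+ m *: (Z ^+ m * v).
Proof. by have := vZp 1 m; rewrite !expr1 mul1n. Qed.

Lemma mono_pos k m : mono u v Z (m, k%:Z) = Z ^+ m * u ^+ k.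
Proof. by []. Qed.
Lemma mono_neg k m : mono u v Z (m, - k%:Z) = Z ^+ m * v ^+ k.
Proof. by case: k => [|k]; rewrite /mono /= ?expr0. Qed.
Definition Hom (d : int) (a : A) := exists s : seq (nat * C),
  a = \sum_(y <- s) y.2 *: mono u v Z (y.1, d).

Lemma Hom0 d : Hom d 0.
Proof. by exists [::]; rewrite big_nil. Qed.
Lemma HomD d a b : Hom d a -> Hom d b -> Hom d (a + b).
Proof. by move=> [s ->] [s' ->]; exists (s ++ s'); rewrite big_cat. Qed.
Lemma HomZs d (x : C) a : Hom d a -> Hom d (x *: a).
Proof.
move=> [s ->]; exists [seq (y.1, x * y.2) | y <- s].
by rewrite big_map scaler_sumr; apply: eq_bigr => y _; rewrite scalerA.
Qed.
Lemma Hom_mono d m : Hom d (mono u v Z (m, d)).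
Proof. by exists [:: (m, 1)]; rewrite big_seq1 scale1r. Qed.
Lemma Hom_sum d (I : Type) (r : seq I) (P : pred I) (F : I -> A) :
  (forall i, P i -> Hom d (F i)) -> Hom d (\sum_(i <- r | P i) F i).
Proof. by move=> HF; apply: big_ind => //; [exact: Hom0 | exact: HomD]. Qed.

Lemma Hom_left (w : A) d d' :
  (forall m, Hom d' (w * mono u v Z (m, d))) -> forall a, Hom d a -> Hom d' (w * a).
Proof.
move=> Hm a [s ->]; rewrite mulr_sumr; apply: Hom_sum => y _.
by rewrite -scalerAr; apply: HomZs.
Qed.

Lemma HomZ d a : Hom d a -> Hom d (Z * a).
Proof.
apply: Hom_left => m; rewrite /mono /= mulrA -exprS.
exact: (Hom_mono d m.+1).
Qed.

Lemma Homu d a : Hom d a -> Hom (d + 1) (u * a).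
Proof.
apply: Hom_left => m; have [[k ->]|[k ->]] := int_cases d.
  rewrite mono_pos mulrA uZm -scalerAl -mulrA -exprS.
  have -> : (k%:Z + 1) = (k.+1)%:Z by lia.
  by apply: HomZs; rewrite -mono_pos; apply: Hom_mono.
rewrite mono_neg mulrA uZm -scalerAl; apply: HomZs.
have -> : (- (k.+1)%:Z + 1) = - k%:Z by lia.
rewrite exprS mulrA -(mulrA _ u) uv mulr_sumr mulr_suml; apply: Hom_sum => i _.
rewrite -scalerAr -scalerAl -exprD; apply: HomZs.
by rewrite -mono_neg; apply: Hom_mono.
Qed.

Lemma Homv d a : Hom d a -> Hom (d - 1) (v * a).
Proof.
apply: Hom_left => m; have [[k ->]|[k ->]] := int_cases' d.
  rewrite mono_neg mulrA vZm -scalerAl -mulrA -exprS.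
  have -> : (- k%:Z - 1) = - (k.+1)%:Z by lia.
  by apply: HomZs; rewrite -mono_neg; apply: Hom_mono.
rewrite mono_pos mulrA vZm -scalerAl; apply: HomZs.
have -> : ((k.+1)%:Z - 1) = k%:Z by lia.
rewrite exprS mulrA -(mulrA _ v) vu mulr_sumr mulr_suml; apply: Hom_sum => i _.
rewrite -scalerAr -scalerAl -exprD; apply: HomZs.
by rewrite -mono_pos; apply: Hom_mono.
Qed.

Lemma HomZp k d a : Hom d a -> Hom d (Z ^+ k * a).
Proof. by elim: k => [|k IH] Ha; rewrite ?expr0 ?mul1r // exprS -mulrA; apply: HomZ; apply: IH. Qed.
Lemma Homup k d a : Hom d a -> Hom (d + k%:Z) (u ^+ k * a).
Proof.
elim: k => [|k IH] Ha; first by rewrite expr0 mul1r addr0.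
rewrite exprS -mulrA; have -> : d + (k.+1)%:Z = (d + k%:Z) + 1 by lia.
by apply: Homu; apply: IH.
Qed.
Lemma Homvp k d a : Hom d a -> Hom (d - k%:Z) (v ^+ k * a).
Proof.
elim: k => [|k IH] Ha; first by rewrite expr0 mul1r subr0.
rewrite exprS -mulrA; have -> : d - (k.+1)%:Z = (d - k%:Z) - 1 by lia.
by apply: Homv; apply: IH.
Qed.

Lemma Hom_mul i j d a : Hom d a -> Hom (j + d) (mono u v Z (i, j) * a).
Proof.
move=> Ha; have [[k ->]|[k ->]] := int_cases' j.
  rewrite mono_neg -mulrA; apply: HomZp; rewrite addrC; exact: Homvp.
rewrite mono_pos -mulrA; apply: HomZp; rewrite addrC; exact: Homup.
Qed.
Lemma qm2pow k : (0 < k)%N -> (q ^- 2) ^+ k != 1.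
Proof. by move=> k0; rewrite exprVn invr_eq1 qpow. Qed.

Lemma T_mono0 i j : j != 0 -> T (mono u v Z (i, j)) = 0.
Proof.
move=> j0; have [[k Ej]|[k Ej]] := int_cases' j.
  have k0 : (0 < k)%N by case: k Ej => [|k] Ej; rewrite // Ej in j0.
  rewrite Ej mono_neg; case: i => [|i].
    rewrite expr0 mul1r; case: k k0 {Ej} => // k _.
    apply: (@fixed_zero _ _ (t^-1)); first by rewrite invr_eq1.
    by rewrite [in LHS]exprS Ttr gv -scalerAr TZs -exprSr.
  apply: (@fixed_zero _ _ ((q ^+ 2) ^+ k)); first exact: qpow.
  have E := vZp k 1; rewrite expr1 muln1 in E.
  rewrite [in LHS]exprS -mulrA Ttr gZ -mulrA E -scalerAr TZs.
  by rewrite mulrA -exprSr.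
rewrite Ej mono_pos; case: i => [|i].
  rewrite expr0 mul1r; apply: (@fixed_zero _ _ t) => //.
  by rewrite [in LHS]exprS Ttr gu -scalerAr TZs -exprSr.
apply: (@fixed_zero _ _ ((q ^- 2) ^+ k.+1)); first exact: qm2pow.
have E := uZp k.+1 1; rewrite expr1 muln1 in E.
rewrite [in LHS]exprS -mulrA Ttr gZ -mulrA E -scalerAr TZs.
by rewrite mulrA -exprSr.
Qed.

Lemma T_Hom0 d a : d != 0 -> Hom d a -> T a = 0.
Proof.
move=> d0 [s ->]; rewrite Tsum big1 // => y _.
by rewrite TZs T_mono0 ?mulr0.
Qed.

Definition hT (e m : nat) := T (Z ^+ m * (u ^+ e * v ^+ e)).
Lemma hT_rec e m : hT e.+1 m =
  \sum_(i < n.+1) c i * (q^-1 ^+ i * (q ^- 2) ^+ (e * i)%N) * hT e (m + i)%N.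
Proof.
rewrite /hT (_ : u ^+ e.+1 * v ^+ e.+1 = u ^+ e * (u * v) * v ^+ e); last first.
  by rewrite exprSr exprS !mulrA.
rewrite uv mulr_sumr mulr_suml mulr_sumr Tsum; apply: eq_bigr => i _.
rewrite -scalerAr. rewrite -scalerAl. rewrite -scalerAr. rewrite TZs. rewrite uZp.
rewrite -(scalerAl _ (Z ^+ i * u ^+ e)) -(scalerAr _ (Z ^+ m)) TZs.
by rewrite exprD !mulrA.
Qed.
Lemma mom_rel m : \sum_(i < n.+1) c i * (q^-1 ^+ i * (q ^- 2) ^+ m - t * q ^+ i) * T (Z ^+ (m + i)%N) = 0.
Proof.
have L1 : T (Z ^+ m * (u * v)) = \sum_(i < n.+1) c i * q^-1 ^+ i * T (Z ^+ (m + i)).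
  by rewrite uv mulr_sumr Tsum; apply: eq_bigr => i _; rewrite -scalerAr TZs exprD.
have L2 : T (Z ^+ m * (v * u)) = \sum_(i < n.+1) c i * q ^+ i * T (Z ^+ (m + i)).
  by rewrite vu mulr_sumr Tsum; apply: eq_bigr => i _; rewrite -scalerAr TZs exprD.
have E : (q ^- 2) ^+ m * T (Z ^+ m * (u * v)) = t * T (Z ^+ m * (v * u)).
  transitivity (T (u * (Z ^+ m * v))).
    by rewrite -TZs mulrA scalerAl -uZm mulrA.
  by rewrite Ttr gu -scalerAr TZs mulrA.
rewrite -[RHS](subrr (t * T (Z ^+ m * (v * u)))) -{1}E L1 L2 !mulr_sumr -sumrB.
by apply: eq_bigr => i _; ring.
Qed.
Lemma pair_pos i b k : T (mono u v Z (i, k%:Z) * mono u v Z (b, - k%:Z)) =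
  (q ^- 2) ^+ (k * b)%N * hT k (i + b)%N.
Proof.
rewrite mono_pos mono_neg mulrA -(mulrA (Z ^+ i)) uZp.
rewrite -(scalerAr _ (Z ^+ i)) -(scalerAl _ (Z ^+ i * _)) TZs.
by rewrite /hT exprD !mulrA.
Qed.

Lemma pair_neg i b k : T (mono u v Z (i, - k%:Z) * mono u v Z (b, k%:Z)) =
  t^-1 ^+ k * ((q ^- 2) ^+ (k * i)%N * hT k (b + i)%N).
Proof.
rewrite mono_neg Ttr gM !gX gZ gv exprZn -(scalerAr _ (Z ^+ i)).
rewrite -(scalerAr _ (mono u v Z (b, k%:Z))) TZs -mono_neg pair_pos //.
Qed.
Lemma hankel_kernel (K : fieldType) N (H : 'M[K]_N) (beta : 'I_N -> K) :
  \det H != 0 -> (forall b, \sum_j beta j * H j b = 0) -> forall j, beta j = 0.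
Proof.
move=> dH Hb j.
have HU : H \in unitmx by rewrite unitmxE unitfE.
pose r := \row_j beta j.
have r0 : r *m H = 0.
  apply/rowP => b; rewrite !mxE; rewrite -[RHS](Hb b).
  by apply: eq_bigr => i _; rewrite mxE.
have : r = 0 by rewrite -(mulmxK HU r) r0 mul0mx.
by move/rowP/(_ j); rewrite !mxE.
Qed.
Lemma nondeg_k (t0 : t != 0) (n1 : (0 < n)%N) k
  (Hdet : forall e N, (e <= k)%N -> (N <= k.+1)%N ->
     \det (\matrix_(i < N, b < N) hT e (i + b)%N) != 0) :
  forall a, inF n u v Z k a -> (forall b, inF n u v Z k b -> T (a * b) = 0) -> a = 0.
Proof.
move=> a [s [Hall ->]] Hb.
pose al := fun m => \sum_(y <- s | y.1 == m) y.2.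
have Hs : forall y, y \in s -> (2 * y.1.1 + n * `|y.1.2| <= k)%N by apply/allP.
have Halpha : forall i d, al (i, d) = 0.
  move=> i d; case: (leqP (2 * i + n * `|d|) k) => hk; last first.
    rewrite /al big1_seq // => y /andP [/eqP ey ys]; have := Hs y ys.
    by rewrite ey /=; lia.
  pose N := ((k - n * `|d|) %/ 2).+1.
  have iN : (i < N)%N by rewrite /N; lia.
  have Hsum : forall b0 : 'I_N,
      \sum_(j < N) al (j : nat, d) * T (mono u v Z ((j : nat), d) * mono u v Z ((b0 : nat), -d)) = 0.
    move=> b0; have Hb0 := Hb (mono u v Z ((b0 : nat), -d)).
    rewrite -[RHS]Hb0; last first.
      exists [:: ((b0 : nat, -d), 1)]; split; last by rewrite big_seq1 scale1r.
      by rewrite /= andbT abszN; have := ltn_ord b0; rewrite /N; lia.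
    rewrite mulr_suml Tsum.
    rewrite (@sum_regroup _ _ _ (fun j : 'I_N => ((j : nat), d))).
    - apply: eq_bigr => j _; rewrite /al mulr_suml; apply: eq_bigr => y /eqP ->.
      by rewrite -scalerAl TZs.
    - by move=> j1 j2 [] /val_inj.
    move=> [[i' d'] x] ys /=; case: (d' =P d) => [ed|ned]; [left|right].
      have := Hs _ ys; rewrite /= ed => h.
      have i'N : (i' < N)%N by rewrite /N; lia.
      by exists (Ordinal i'N).
    rewrite -scalerAl TZs (@T_Hom0 (d' + - d)) ?mulr0 //.
      by apply/eqP; move=> h; apply: ned; lia.
    by apply: Hom_mul; apply: Hom_mono.
  have Nk : (N <= k.+1)%N by rewrite /N; lia.
  have ek : (`|d| <= k)%N by have := leq_pmull `|d| n1; lia.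
  have q20 : q ^- 2 != 0 by rewrite invr_eq0 expf_eq0.
  have [[k' Ed]|[k' Ed]] := int_cases d.
    have ek' : (k' <= k)%N by rewrite Ed in ek.
    have Hk := Hdet k' N ek' Nk.
    have := @hankel_kernel _ _ _ (fun j => al ((j : nat), d)) Hk _ (Ordinal iN).
    apply=> b; have := Hsum b; rewrite Ed.
    under eq_bigr do rewrite pair_pos.
    move=> H0; have : (q ^- 2) ^+ (k' * b) *
       \sum_(j < N) al ((j : nat), k'%:Z) * (\matrix_(i0 < N, b1 < N) hT k' (i0 + b1)) j b = 0.
      rewrite mulr_sumr -[RHS]H0; apply: eq_bigr => j _; rewrite mxE; ring.
    by move/eqP; rewrite mulf_eq0 expf_eq0 (negPf q20) andbF /= => /eqP.
  have ek' : (k'.+1 <= k)%N by rewrite Ed abszN in ek.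
  have Hk := Hdet k'.+1 N ek' Nk.
  have Hz : al (i, d) * (q ^- 2) ^+ (k'.+1 * i) = 0.
    apply: (@hankel_kernel _ _ _
     (fun j : 'I_N => al ((j : nat), d) * (q ^- 2) ^+ (k'.+1 * j)) Hk _ (Ordinal iN)).
    move=> b; have := Hsum b; rewrite Ed opprK.
    under eq_bigr do rewrite pair_neg.
    move=> H0; have : t^-1 ^+ k'.+1 * \sum_(j < N) (al ((j : nat), - (k'.+1)%:Z) *
       (q ^- 2) ^+ (k'.+1 * j)) * (\matrix_(i0 < N, b1 < N) hT k'.+1 (i0 + b1)) j b = 0.
      rewrite mulr_sumr -[RHS]H0; apply: eq_bigr => j _; rewrite mxE addnC; ring.
    by move/eqP; rewrite mulf_eq0 expf_eq0 invr_eq0 (negPf t0) andbF /= => /eqP.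
  by move/eqP: Hz; rewrite mulf_eq0 expf_eq0 (negPf q20) andbF orbF => /eqP.
rewrite (@sum_regroup _ _ _
   (fun p : 'I_k.+1 * 'I_(2 * k).+1 => ((p.1 : nat), (p.2 : nat)%:Z - k%:Z))).
- apply: big1 => p _.
  rewrite (eq_bigr (fun y => y.2 *: mono u v Z ((p.1 : nat), (p.2 : nat)%:Z - k%:Z))); last first.
    by move=> y /eqP ->.
  rewrite -scaler_suml; have := Halpha p.1 ((p.2 : nat)%:Z - k%:Z); rewrite /al => ->.
  by rewrite scale0r.
- move=> [a1 b1] [a2 b2] /= [/ord_inj -> /addIr [/ord_inj ->]] //.
move=> [[i' d'] x] ys; left; have := Hs _ ys => /= h.
have ed : (`|d'| <= k)%N by have := leq_pmull `|d'| n1; lia.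
have i'k : (i' < k.+1)%N by lia.
have r2 : (absz (d' + k%:Z)%R < (2 * k).+1)%N by lia.
exists (Ordinal i'k, Ordinal r2) => /=; congr (_, _); lia.
Qed.
End Alg.

Section Poly.
Variable R : realType.
Local Notation C := R[i].
Variables (q t : C) (n : nat).
Hypothesis n1 : (0 < n)%N.
Local Notation P := {mpoly C[(2 * n).+1]}.

Definition Xv (j : nat) : P := 'X_(inord j).
Definition dd (m i : nat) : C := q^-1 ^+ i * (q ^- 2) ^+ m - t * q ^+ i.

Fixpoint Mf (f m : nat) : P :=
  if f is f'.+1 then
    (if (m < n)%N then Xv n ^+ m * Xv (n.+1 + m)
     else - \sum_(i < n) ((dd (m - n) i / dd (m - n) n)%:MP * Xv i * Xv n ^+ (n.-1 - i)
                 * Mf f' (m - n + i)))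
  else 0.
Definition Mp m := Mf m.+1 m.

Lemma Mf_eq f1 f2 m : (m < f1)%N -> (m < f2)%N -> Mf f1 m = Mf f2 m.
Proof.
elim: f1 f2 m => [|f1 IH] [|f2] m //= h1 h2.
case: ifP => // hm; congr (- _); apply: eq_bigr => i _; congr (_ * _).
apply: IH; have := ltn_ord i; lia.
Qed.

Lemma Mp_small m : (m < n)%N -> Mp m = Xv n ^+ m * Xv (n.+1 + m).
Proof. by move=> hm; rewrite /Mp /= hm. Qed.

Lemma Mp_big m : Mp (m + n) = - \sum_(i < n) ((dd m i / dd m n)%:MP * Xv i
    * Xv n ^+ (n.-1 - i) * Mp (m + i)).
Proof.
rewrite [LHS]/Mp /= ifF; last by apply/negbTE; rewrite -leqNgt leq_addl.
rewrite addnK; congr (- _); apply: eq_bigr => i _; congr (_ * _).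
rewrite /Mp; apply: Mf_eq; have := ltn_ord i; lia.
Qed.

Lemma Mev (x : 'I_(2 * n).+1 -> C) (mu : nat -> C) :
  (forall s, (s < n)%N -> mu s = x (inord (n.+1 + s))) ->
  (forall m, \sum_(i < n.+1) x (inord i) * dd m i * mu (m + i)%N = 0) ->
  (forall m, dd m n != 0) ->
  forall m, (Mp m).@[x] = x (inord n) ^+ m * mu m.
Proof.
move=> Hinit Hrel Hd; elim/ltn_ind => m IH.
case: (ltnP m n) => hm.
  by rewrite Mp_small // mevalM rmorphXn /= /Xv !mevalXU Hinit.
have Hm : m = (m - n + n)%N by rewrite subnK.
move: IH; rewrite Hm; move: (m - n)%N => m' IH.
rewrite Mp_big rmorphN rmorph_sum.
have := Hrel m'; rewrite big_ord_recr /= => /eqP; rewrite addr_eq0 => /eqP E.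
rewrite (eq_bigr (fun i : 'I_n => x (inord n) ^+ (m' + n)%N.-1 / dd m' n *
   (x (inord i) * dd m' i * mu (m' + i)%N))); last first.
  move=> i _; rewrite !mevalM mevalC rmorphXn /= /Xv !mevalXU IH; last first.
    by have := ltn_ord i; lia.
  have -> : (m' + n).-1 = ((n.-1 - i) + (m' + i))%N by have := ltn_ord i; lia.
  move: (n.-1 - i)%N (m' + i)%N => a b.
  by rewrite exprD; ring.
rewrite -mulr_sumr E.
have [p Hp] : exists p, (m' + n)%N = p.+1 by exists (m' + n).-1; lia.
rewrite Hp /= exprS; field; exact: Hd.
Qed.
Fixpoint hn (c mu : nat -> C) (e m : nat) {struct e} : C :=
  if e is e'.+1 then
    \sum_(i < n.+1) c i * (q^-1 ^+ i * (q ^- 2) ^+ (e' * i)%N) * hn c mu e' (m + i)%N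
  else mu m.

Fixpoint Wp (S e m : nat) {struct e} : P :=
  if e is e'.+1 then
    \sum_(i < n.+1) (q^-1 ^+ i * (q ^- 2) ^+ (e' * i)%N)%:MP * Xv i * Wp S e' (m + i)%N
  else Xv n ^+ (S - m)%N * Mp m.

Lemma Wev (x : 'I_(2 * n).+1 -> C) (mu : nat -> C) :
  (forall m, (Mp m).@[x] = x (inord n) ^+ m * mu m) ->
  forall e m S, (m + n * e <= S)%N ->
  (Wp S e m).@[x] = x (inord n) ^+ S * hn (fun i => x (inord i)) mu e m.
Proof.
move=> HM; elim=> [|e IH] m S hS /=.
  rewrite rmorphM rmorphXn /= /Xv mevalXU HM mulrA -exprD.
  by rewrite subnK //; move: hS; rewrite muln0 addn0.
rewrite rmorph_sum mulr_sumr; apply: eq_bigr => i _.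
rewrite !rmorphM /= mevalC /Xv mevalXU IH; last by have := ltn_ord i; lia.
by rewrite ?mevalC; ring.
Qed.

Definition Dp e N := \det (\matrix_(i < N, b < N) Wp (2 * N + n * e)%N e (i + b)%N).

Lemma Dp_ev (x : 'I_(2 * n).+1 -> C) (mu : nat -> C) :
  (forall m, (Mp m).@[x] = x (inord n) ^+ m * mu m) -> forall e N,
  (Dp e N).@[x] = (x (inord n) ^+ (2 * N + n * e)%N) ^+ N *
     \det (\matrix_(i < N, b < N) hn (fun i => x (inord i)) mu e (i + b)%N).
Proof.
move=> HM e N; rewrite /Dp -det_map_mx -detZ; congr (\det _).
apply/matrixP => i b; rewrite !mxE; apply: (Wev HM).
have := ltn_ord i; have := ltn_ord b; lia.
Qed.

Definition pp (k : nat) : P := \prod_(e < k.+1) \prod_(N < k.+2) Dp e N.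
Section Wit.
Hypothesis q0 : q != 0.
Hypothesis qlt : `|q| < 1.
Hypothesis t0 : t != 0.
Hypothesis n2 : (2 <= n)%N.
Hypothesis ddn : forall m, dd m n != 0.

Lemma qpow1 a : (0 < a)%N -> q ^+ a != 1.
Proof.
move=> a0; apply/eqP => h; have : `|q ^+ a| < 1.
  by rewrite normrX exprn_ilt1 ?normr_ge0 // -lt0n.
by rewrite h normr1 ltxx.
Qed.

Lemma qinj a b : q ^+ a = q ^+ b -> a = b.
Proof.
wlog hab : a b / (a <= b)%N => [W|] h.
  by case: (leqP a b) => [/W|/ltnW /W]; [apply|move=> W'; symmetry; apply: W'].
case: (ltngtP a b) hab => // ab _; exfalso.
have : q ^+ (b - a) == 1.
  by rewrite expfB // -h divff // expf_eq0 negb_and q0 orbT.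
by rewrite (negPf (qpow1 _)) // subn_gt0.
Qed.
Definition Pw (L : nat) : {poly C} :=
  ('X - 1%:P) * ('X - (q ^+ (2 * L))%:P) * 'X^(n - 2).

Lemma Pw_ev L z : (Pw L).[z] = (z - 1) * (z - q ^+ (2 * L)) * z ^+ (n - 2).
Proof. by rewrite /Pw !hornerE. Qed.

Lemma size_Pw L : size (Pw L) = n.+1.
Proof.
rewrite /Pw size_mul; last by rewrite monic_neq0 // monicXn.
  rewrite size_mul ?size_XsubC ?size_polyXn //; try by rewrite -size_poly_eq0 size_XsubC.
  by rewrite /=; lia.
by rewrite mulf_neq0 // -size_poly_eq0 size_XsubC.
Qed.

Lemma Pw_n L : (Pw L)`_n = 1.
Proof.
have := lead_coefE (Pw L); rewrite size_Pw /= => <-.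
by rewrite /Pw !lead_coefM !lead_coefXsubC lead_coefXn !mul1r.
Qed.

Lemma Pw_horner L z : (Pw L).[z] = \sum_(i < n.+1) (Pw L)`_i * z ^+ i.
Proof. by rewrite horner_coef size_Pw. Qed.
Definition sq (l : nat) : C := q ^+ (2 * l + 1).
Definition mu0 (L m : nat) : C := \sum_(l < L) t ^+ l * sq l ^+ m.
Definition x0 (L : nat) : 'I_(2 * n).+1 -> C :=
  fun j => if (j <= n)%N then (Pw L)`_j else mu0 L (j - n.+1)%N.

Lemma x0_c L i : (i <= n)%N -> x0 L (inord i) = (Pw L)`_i.
Proof. by move=> hi; rewrite /x0 inordK ?hi //; lia. Qed.
Lemma x0_t L s : (s < n)%N -> x0 L (inord (n.+1 + s)) = mu0 L s.
Proof.
move=> hs; rewrite /x0 inordK; last by lia.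
by rewrite ifF ?addKn //; apply/negbTE; rewrite -ltnNge; lia.
Qed.

Lemma sqS l : sq l.+1 = q ^+ 2 * sq l.
Proof. by rewrite /sq -exprD; congr (_ ^+ _); lia. Qed.

Lemma rel_wit L m : (0 < L)%N ->
  \sum_(i < n.+1) x0 L (inord i) * dd m i * mu0 L (m + i)%N = 0.
Proof.
case: L => // L _.
have E1 : forall i : 'I_n.+1, x0 L.+1 (inord i) * dd m i * mu0 L.+1 (m + i)%N =
   \sum_(l < L.+1) (t ^+ l * sq l ^+ m) * ((q ^- 2) ^+ m * ((Pw L.+1)`_i * (q^-1 * sq l) ^+ i)
      - t * ((Pw L.+1)`_i * (q * sq l) ^+ i)).
  move=> i; rewrite x0_c ?leq_ord // /mu0 mulr_sumr; apply: eq_bigr => l _.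
  rewrite /dd exprD !exprMn; ring.
rewrite (eq_bigr _ (fun i _ => E1 i)) exchange_big /=.
under eq_bigr do rewrite -mulr_sumr sumrB -!mulr_sumr -!Pw_horner.
pose G : nat -> C := fun l => t ^+ l * sq l ^+ m * ((q ^- 2) ^+ m * (Pw L.+1).[q^-1 * sq l]).
pose F : nat -> C := fun l => t ^+ l.+1 * sq l ^+ m * (Pw L.+1).[q * sq l].
rewrite (eq_bigr (fun l : 'I_L.+1 => G l - F l)); last first.
  by move=> l _; rewrite /G /F /= [t ^+ l.+1]exprS helper_tel.
rewrite sumrB big_ord_recl big_ord_recr /=.
have -> : G 0%N = 0.
  by rewrite /G /sq muln0 add0n expr1 mulVf // Pw_ev subrr !mul0r !mulr0.
have -> : F L = 0.
  rewrite /F /sq -exprS Pw_ev (_ : (2 * L + 1).+1 = 2 * L.+1)%N; last by lia.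
  by rewrite subrr mulr0 mul0r mulr0.
apply/eqP; rewrite add0r addr0 subr_eq0; apply/eqP; apply: eq_bigr => l _.
rewrite /G /F /bump /= sqS add1n.
have h1 : q^-1 * (q ^+ 2 * sq l) = q * sq l by field.
have h2 : (q ^+ 2 * sq l) ^+ m * (q ^- 2) ^+ m = sq l ^+ m.
  by rewrite exprMn mulrAC -exprMn mulfV ?expf_eq0 // expr1n mul1r.
by rewrite h1 mulrA -(mulrA (t ^+ l.+1)) h2.
Qed.
Fixpoint rho (L e l : nat) : C :=
  if e is e'.+1 then rho L e' l * (Pw L).[q^-1 * (q ^- 2) ^+ e' * sq l] else 1.

Lemma hn_wit L e m : hn (fun i => x0 L (inord i)) (mu0 L) e m =
  \sum_(l < L) t ^+ l * rho L e l * sq l ^+ m.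
Proof.
elim: e m => [|e IH] m /=.
  by rewrite /mu0; apply: eq_bigr => l _; rewrite mulr1.
under eq_bigr => i _ do rewrite IH mulr_sumr.
rewrite exchange_big /=; apply: eq_bigr => l _.
rewrite Pw_horner !mulr_sumr mulr_suml; apply: eq_bigr => i _.
rewrite x0_c ?leq_ord // !exprMn exprM exprD.
ring.
Qed.
Lemma zfac l r : (r <= l)%N -> q^-1 * (q ^- 2) ^+ r * sq l = q ^+ (2 * (l - r)).
Proof.
move=> rl; have E : q ^+ (2 * l) = q ^+ (2 * (l - r)) * q ^+ (2 * r).
  by rewrite -exprD; congr (_ ^+ _); lia.
rewrite /sq exprD expr1 E exprVn -exprM.
have Y0 : q ^+ (2 * r) != 0 by rewrite expf_eq0 negb_and q0 orbT.
move: (q ^+ (2 * (l - r))) (q ^+ (2 * r)) Y0 => X Y Y0.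
by field; rewrite Y0 q0.
Qed.

Lemma rho_zero L e l : (l < e)%N -> rho L e l = 0.
Proof.
elim: e => // e IH hl /=; case: (ltnP l e) => h; first by rewrite IH ?mul0r.
have -> : l = e by lia.
by rewrite zfac // subnn muln0 expr0 Pw_ev subrr !mul0r mulr0.
Qed.

Lemma rho_nz L e l : (e <= l)%N -> (l < L)%N -> rho L e l != 0.
Proof.
move=> el lL; elim: e el => [|e IH] el /=; first exact: oner_neq0.
rewrite mulf_neq0 ?IH //; first by lia.
rewrite zfac; last by lia.
rewrite Pw_ev !mulf_neq0 //.
- rewrite subr_eq0; apply/eqP => h; have : (2 * (l - e) = 0)%N.
    by apply: qinj; rewrite h expr0.
  lia.
- rewrite subr_eq0; apply/eqP => /qinj; lia.
by rewrite expf_eq0 negb_and expf_eq0 negb_and q0 !orbT.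
Qed.
Lemma det_hankel_wit e N :
  \det (\matrix_(i < N, b < N) \sum_(l < e + N) t ^+ l * rho (e + N) e l * sq l ^+ (i + b)%N) != 0.
Proof.
pose z : 'rV[C]_N := \row_j sq (e + j).
pose w : 'rV[C]_N := \row_j (t ^+ (e + j) * rho (e + N) e (e + j)).
have E : \matrix_(i < N, b < N) \sum_(l < e + N) t ^+ l * rho (e + N) e l * sq l ^+ (i + b)%N
   = Vandermonde N z *m diag_mx w *m (Vandermonde N z)^T.
  apply/matrixP => i b; rewrite !mxE big_split_ord /= big1 ?add0r; last first.
    by move=> l _; rewrite rho_zero ?mulr0 ?mul0r.
  apply: eq_bigr => j _; rewrite mul_mx_diag !mxE (exprD (sq _)).
  ring.
rewrite E !det_mulmx det_tr det_diag det_Vandermonde.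
rewrite !mulf_neq0 //.
- apply/prodf_neq0 => i _; apply/prodf_neq0 => j ij; rewrite !mxE subr_eq0.
  by apply/eqP => /qinj h; move: ij; lia.
- apply/prodf_neq0 => j _; rewrite mxE mulf_neq0 ?expf_neq0 //.
  by apply: rho_nz; have := ltn_ord j; lia.
apply/prodf_neq0 => i _; apply/prodf_neq0 => j ij; rewrite !mxE subr_eq0.
by apply/eqP => /qinj h; move: ij; lia.
Qed.
Lemma Dp_neq0 e N : Dp e N != 0.
Proof.
case: N => [|N].
  by rewrite /Dp det_mx00 oner_neq0.
apply/negP => /eqP D0.
have HM : forall m, (Mp m).@[x0 (e + N.+1)] = x0 (e + N.+1) (inord n) ^+ m * mu0 (e + N.+1) m.
  apply: Mev => //.
  - by move=> s hs; rewrite x0_t.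
  by move=> m; apply: rel_wit; lia.
have := Dp_ev HM e N.+1; rewrite D0 meval0 x0_c // Pw_n expr1n expr1n mul1r.
move/esym/eqP; apply/negP.
set M := \matrix_(i < N.+1, b < N.+1) _.
have -> : M = \matrix_(i < N.+1, b < N.+1)
    \sum_(l < e + N.+1) t ^+ l * rho (e + N.+1) e l * sq l ^+ (i + b)%N.
  by apply/matrixP => i b; rewrite !mxE hn_wit.
exact: det_hankel_wit.
Qed.
Lemma pp_neq0 k : pp k != 0.
Proof.
by apply/prodf_neq0 => e _; apply/prodf_neq0 => N _; exact: Dp_neq0.
Qed.
End Wit.

Lemma pp_factor (x : 'I_(2 * n).+1 -> C) k e N :
  (e <= k)%N -> (N <= k.+1)%N -> (pp k).@[x] != 0 -> (Dp e N).@[x] != 0.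
Proof.
move=> ek Nk; rewrite /pp rmorph_prod => /prodf_neq0 H.
have := H (Ordinal (ek : (e < k.+1)%N)) isT; rewrite rmorph_prod => /prodf_neq0 H'.
exact: (H' (Ordinal (Nk : (N < k.+2)%N)) isT).
Qed.
End Poly.

Lemma hT_hn (R : realType) (q : R[i]) (n : nat) (c : nat -> R[i]) (A : algType R[i])
  (u v Z : A) (g : A -> A) (T : A -> R[i]) :
  is_Aplus q n c u v Z -> twisted_trace g T -> q != 0 ->
  forall e m, hT u v Z T e m = hn q n c (fun m => T (Z ^+ m)) e m.
Proof.
move=> HA HT q0; elim=> [|e IH] m.
  by rewrite /hT /= !expr0 !mulr1.
rewrite (hT_rec HA HT q0) /=; apply: eq_bigr => i _; by rewrite IH.
Qed.

Unset Implicit Arguments.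

Theorem theorem5p6 (R : realType) (q : R[i]) (n : nat) :
  0 < `|q| < 1 -> (2 <= n)%N ->
  exists e : nat -> R[i],
    (forall k : nat, exists m, e m = q ^- (2 * k)) /\
    forall t : R[i], (forall m, t != e m) ->
    exists p : nat -> {mpoly R[i][(2 * n).+1]},
      (forall k, p k != 0) /\
      forall x : 'I_(2 * n).+1 -> R[i],
        (forall k, (p k).@[x] != 0) ->
        x (inord n) != 0 ->
        let c := fun i : nat => x (inord i) in
        forall (A : algType R[i]) (u v Z : A),
          is_Aplus q n c u v Z ->
          forall g : A -> A, is_gt t u v Z g ->
          forall T : A -> R[i], twisted_trace g T ->
          (forall i : nat, (i < n)%N -> T (Z ^+ i) = x (inord (n.+1 + i))) ->
          trace_nondegenerate n u v Z T.
Proof.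
move=> /andP [qpos qlt] n2.
have q0 : q != 0 by rewrite -normr_gt0.
have n1 : (0 < n)%N by lia.
exists (fun m => if m is k.+1 then q ^- (2 * k) else 0).
split; first by move=> k; exists k.+1.
move=> t Ht.
have t0 : t != 0 := Ht 0%N.
have t1 : t != 1 by have := Ht 1%N; rewrite /= muln0 expr0 invr1.
have qpow : forall k, (0 < k)%N -> (q ^+ 2) ^+ k != 1.
  by move=> k k0; rewrite -exprM; apply: qpow1 => //; lia.
have ddn : forall m, dd q t m n != 0.
  move=> m; apply/eqP => h; have := Ht (m + n).+1; rewrite /=.
  move/eqP; apply; move: h; rewrite /dd => /eqP; rewrite subr_eq0 => /eqP h.
  have qn0 : q ^+ n != 0 by rewrite expf_eq0 negb_and q0 orbT.
  apply: (mulIf qn0); rewrite -h !exprVn -exprM.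
  have -> : (2 * (m + n) = 2 * m + n + n)%N by lia.
  rewrite !exprD; field.
  by rewrite !expf_eq0 !negb_and q0 !orbT.
exists (pp q t n); split; first exact: pp_neq0.
move=> x Hx xn0 c A u v Z HA g Hg T HT Hinit k.
apply: (nondeg_k HA Hg HT q0 qpow t1 t0 n1) => e N ek Nk.
have HM : forall m, (Mp q t n m).@[x] = x (inord n) ^+ m * T (Z ^+ m).
  apply: (Mev n1) => //.
  by move=> m; exact: (mom_rel HA Hg HT q0 m).
have := pp_factor ek Nk (Hx k); rewrite (Dp_ev n1 HM).
rewrite mulf_eq0 negb_or => /andP [_]; congr (_ != _); congr (\det _).
by apply/matrixP => i b; rewrite !mxE (hT_hn HA HT q0).
Qed.
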